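(* Let $q$ be a prime power and let $\mathcal C\subseteq\mathbb F_q^n$ be an $\mathbb F_q$-linear code of dimension $k\ge 1$ with $4\le d_I(\mathcal C)\le 2n-2$. Then $d_I(\mathcal C)\le 2n-2k$.
   Context: For $\mathbf u,\mathbf v\in\mathbb F_q^n$, the insdel distance $d_I(\mathbf u,\mathbf v)$ is the minimum number of insertions and deletions transforming $\mathbf u$ into $\mathbf v$; equivalently $d_I(\mathbf u,\mathbf v)=2n-2\ell_{\rm LCS}(\mathbf u,\mathbf v)$ where $\ell_{\rm LCS}$ is the length of a longest common subsequence. $d_I(\mathcal C)$ is the minimum insdel distance between distinct codewords. *)

(* Defs.v *)
From HB Require Import structures.
From mathcomp Require Import all_boot all_order all_algebra all_field.
Set Implicit Arguments. Unset Strict Implicit. Unset Printing Implicit Defensive.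
Import GRing.Theory.

Definition word (F : finFieldType) (n : nat) (u : 'rV[F]_n) : seq F :=
  [seq u ord0 i | i <- enum 'I_n].

Definition lcs_len (T : finType) (s t : seq T) : nat :=
  \max_(m : (size s).-tuple bool | subseq (mask m s) t) size (mask m s).

Definition insdel_dist (F : finFieldType) (n : nat) (u v : 'rV[F]_n) : nat :=
  2 * n - 2 * lcs_len (word u) (word v).

(* Minimum insdel distance of a code C (minimum over pairs of distinct
   codewords; the default 2n is never attained as a proper bound issue since
   d_I <= 2n always). *)
Definition insdel_min_dist (F : finFieldType) (n : nat)
    (C : {vspace 'rV[F]_n}) : nat :=
  \big[minn/(2 * n)%N]_(u : 'rV[F]_n | u \in C)
    \big[minn/(2 * n)%N]_(v : 'rV[F]_n | (v \in C) && (v != u)) insdel_dist u v.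

(* Main.v *)
Require Import Defs.
From HB Require Import structures.
From mathcomp Require Import all_boot all_order all_algebra all_field.
From mathcomp Require Import zify.
Set Implicit Arguments. Unset Strict Implicit. Unset Printing Implicit Defensive.
Import GRing.Theory.
Local Open Scope ring_scope.

Lemma size_word (F : finFieldType) n (u : 'rV[F]_n) : size (word u) = n.
Proof. by rewrite /word size_map size_enum_ord. Qed.

Lemma nth_word (F : finFieldType) n (u : 'rV[F]_n) c (hc : (c < n)%N) :
  nth 0 (word u) c = u ord0 (Ordinal hc).
Proof.
rewrite /word (nth_map (Ordinal hc)) ?size_enum_ord //.
by congr (u _ _); apply: val_inj; rewrite /= nth_enum_ord.
Qed.

Lemma nth_word0 (F : finFieldType) n c : nth 0 (word (0 : 'rV[F]_n)) c = 0.
Proof.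
case: (ltnP c n) => hc; first by rewrite (nth_word _ hc) mxE.
by rewrite nth_default ?size_word.
Qed.

Lemma sum_delta (F : finFieldType) n (w : 'rV[F]_n) c :
  \sum_(p < n) w 0 p * (p == c :> nat)%:R = nth 0 (word w) c.
Proof.
case: (ltnP c n) => hc.
  rewrite (bigD1 (Ordinal hc)) //= eqxx mulr1 big1 ?addr0 ?nth_word //.
  move=> p hp; suff -> : (p == c :> nat) = false by rewrite mulr0.
  by apply/negbTE; apply: contra hp => /eqP h; apply/eqP/val_inj.
rewrite nth_default ?size_word // big1 // => p _.
suff -> : (p == c :> nat) = false by rewrite mulr0.
by apply/negbTE; rewrite neq_ltn (leq_trans (ltn_ord p) hc).
Qed.
Lemma lcs_shift (T : finType) (x0 : T) (s t : seq T) m :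
  size s = size t -> (m < size t)%N ->
  (forall j, (j < m)%N -> nth x0 s j = nth x0 t j.+1) -> (m <= lcs_len s t)%N.
Proof.
move=> hst hm heq.
have hms : (m <= size s)%N by rewrite hst ltnW.
have Hsz : size (nseq m true ++ nseq (size s - m) false) == size s.
  by rewrite size_cat !size_nseq subnKC.
have hmask : mask (Tuple Hsz) s = take m s.
  rewrite /=; set s2 := (X in mask _ X); rewrite -[s2](cat_take_drop m) mask_cat; last first.
    by rewrite size_nseq size_take hst hm.
  by rewrite mask_false cats0 -takeEmask take_oversize // size_take hst hm.
have htk : take m s = take m (drop 1 t).
  apply: (@eq_from_nth _ x0).
    rewrite !size_takel // size_drop; case: (size t) hm => // st.
    by rewrite ltnS subn1.
  move=> j; rewrite size_takel // => hj.
  by rewrite nth_take // nth_take // nth_drop add1n heq.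
rewrite /lcs_len.
have := @leq_bigmax_cond _ (fun mm : (size s).-tuple bool => subseq (mask mm s) t)
  (fun mm => size (mask mm s)) (Tuple Hsz).
rewrite hmask size_takel //; apply.
by rewrite htk (subseq_trans (take_subseq _ _) (drop_subseq _ _)).
Qed.

Lemma bigmin_le_seq (I : eqType) (r : seq I) (P : pred I) (F : I -> nat) x i0 :
  i0 \in r -> P i0 -> (\big[minn/x]_(i <- r | P i) F i <= F i0)%N.
Proof.
elim: r => [|a r IH] //= hin hP; rewrite big_cons.
move: hin; rewrite inE => /orP [/eqP <-|hin]; first by rewrite hP geq_minl.
case: (P a); last exact: IH.
exact: leq_trans (geq_minr _ _) (IH hin hP).
Qed.

Lemma bigmin_le (I : finType) (P : pred I) (F : I -> nat) x i0 :
  P i0 -> (\big[minn/x]_(i | P i) F i <= F i0)%N.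
Proof. by move=> hP; apply: bigmin_le_seq => //; rewrite mem_index_enum. Qed.

Lemma min_le_dist (F : finFieldType) n (C : {vspace 'rV[F]_n}) u v :
  u \in C -> v \in C -> v != u -> (insdel_min_dist C <= insdel_dist u v)%N.
Proof.
move=> hu hv hne; rewrite /insdel_min_dist.
apply: (leq_trans (bigmin_le (P := fun w => w \in C) _ _ hu)).
by apply: (bigmin_le (P := fun w => (w \in C) && (w != u))); rewrite hv hne.
Qed.

Lemma mulmx_entry (F : finFieldType) n m (w : 'rV[F]_n) (f : 'I_n -> 'I_m -> F) i :
  (w *m \matrix_(p, i) f p i) 0 i = \sum_(p < n) w 0 p * f p i.
Proof. by rewrite mxE; apply: eq_bigr => p _; rewrite mxE. Qed.

Lemma core (F : finFieldType) n (C : {vspace 'rV[F]_n}) m :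
  (m.+1 <= n)%N -> (m.+1 < \dim C + \dim C)%N ->
  exists u v, [/\ u \in C, v \in C, v != u &
    forall j, (j < m)%N -> nth 0 (word u) j = nth 0 (word v) j.+1].
Proof.
move=> hmn hmk.
set k := \dim C in hmk *.
pose b := vbasis C.
pose G : 'M[F]_(k, n) := \matrix_(j < k) b`_j.
pose P : 'M[F]_(n, m.+1) :=
  \matrix_(p, i) (if i == ord0 then 0 else (p == i.-1 :> nat)%:R).
pose Q : 'M[F]_(n, m.+1) :=
  \matrix_(p, i) (if i == ord0 then (p == 0 :> nat)%:R else - (p == i :> nat)%:R).
pose M := col_mx (G *m P) (G *m Q).
have hK : (0 < \rank (kermx M))%N.
  by rewrite mxrank_ker subn_gt0 (leq_ltn_trans (rank_leq_col M) hmk).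
have [r hr] : exists r, row r (kermx M) != 0.
  apply/existsP; apply: contraLR hK; rewrite negb_exists => /forallP hall.
  suff -> : kermx M = 0 by rewrite mxrank0.
  by apply/row_matrixP => r; rewrite row0; apply/eqP; rewrite -[_ == _]negbK hall.
set a := row r (kermx M) in hr.
have haM : a *m M = 0.
  by apply/eqP; rewrite -sub_kermx row_sub.
pose x := lsubmx a; pose y := rsubmx a.
pose u := x *m G; pose v := y *m G.
have inC : forall z : 'rV_k, z *m G \in C.
  move=> z; rewrite mulmx_sum_row; apply: memv_suml => j _; apply: memvZ.
  by rewrite rowK; apply: vbasis_mem; rewrite mem_nth // size_tuple.
have inj : forall z : 'rV_k, z *m G = 0 -> z = 0.
  move=> z; rewrite mulmx_sum_row => hz.
  have hf := basis_free (vbasisP C).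
  have := (freeP hf) (fun j => z 0 j).
  have hz' : \sum_(i < k) z 0 i *: b`_i = 0.
    rewrite -[RHS]hz; apply: eq_bigr => i _; by rewrite rowK.
  move/(_ hz') => h; apply/rowP => j; rewrite mxE.
  have -> : 0 = ord0 :> 'I_1 by apply/val_inj.
  exact: h.
have huv : u *m P + v *m Q = 0.
  by rewrite -haM -[a]hsubmxK mul_row_col !mulmxA.
have hent : forall i, (u *m P) 0 i + (v *m Q) 0 i = 0.
  move=> i; move: (congr1 (fun A : 'rV_m.+1 => A 0 i) huv) => /=.
  by rewrite [in LHS]mxE [in RHS]mxE.
have hv0 : nth 0 (word v) 0 = 0.
  have := hent ord0; rewrite !mulmx_entry /= big1 ?add0r => [|p _]; last by rewrite mulr0.
  by rewrite sum_delta.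
have hsh : forall j, (j < m)%N -> nth 0 (word u) j = nth 0 (word v) j.+1.
  move=> j hj; have := hent (inord j.+1); rewrite !mulmx_entry.
  have hi : (inord j.+1 : 'I_m.+1) == ord0 = false.
    by apply/negbTE; rewrite -val_eqE /= inordK.
  rewrite hi.
  under eq_bigr do rewrite inordK //.
  under [X in _ + X]eq_bigr do rewrite inordK // mulrN.
  by rewrite sumrN sum_delta sum_delta => /eqP; rewrite subr_eq0 => /eqP.
case: (eqVneq v u) => [evu|nvu]; last first.
  by exists u, v; split => //; apply: inC.
have hu0 : forall j, (j <= m)%N -> nth 0 (word u) j = 0.
  elim=> [|j IH] hj; first by rewrite -evu.
  by rewrite -evu -hsh // IH // ltnW.
have nu0 : u != 0.
  apply/eqP => hu; move: hr; rewrite -/a -[a]hsubmxK.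
  have hx : x = 0 by apply: inj.
  have hy : y = 0 by apply: inj; rewrite -/v evu.
  by rewrite -/x -/y hx hy row_mx0 eqxx.
exists 0, u; split => //; first exact: mem0v.
  by apply: inC.
move=> j hj; rewrite nth_word0 hu0 //.
Qed.

Lemma pair_bound (F : finFieldType) n (C : {vspace 'rV[F]_n}) m :
  (m.+1 <= n)%N -> (m.+1 < \dim C + \dim C)%N ->
  (insdel_min_dist C <= 2 * n - 2 * m)%N.
Proof.
move=> h1 h2; have [u [v [hu hv hne hsh]]] := core h1 h2.
apply: leq_trans (min_le_dist hu hv hne) _.
rewrite /insdel_dist leq_sub2l // leq_mul2l /=.
by apply: (lcs_shift (x0 := 0)) => //; rewrite !size_word.
Qed.

Theorem corollary3p7 (F : finFieldType) (n k : nat) (C : {vspace 'rV[F]_n}) :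
  \dim C = k -> (1 <= k)%N ->
  (4 <= insdel_min_dist C)%N -> (insdel_min_dist C <= 2 * n - 2)%N ->
  (insdel_min_dist C <= 2 * n - 2 * k)%N.
Proof.
move=> hk k1 h4 h2.
case: n C hk h4 h2 => [|n] C hk h4 h2.
  by have := leq_trans h4 h2.
case: (leqP n.+1 k) => hnk.
  have := @pair_bound F n.+1 C n (leqnn _).
  rewrite hk; move/(_ ltac:(lia)) => h.
  have := leq_trans h4 h; lia.
case: (ltnP 1 k) => hk2; last first.
  by have -> : k = 1%N by apply/eqP; rewrite eqn_leq hk2 k1.
apply: pair_bound => //.
rewrite hk; lia.
Qed.
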